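(* Let $\Gamma\subseteq C^0(\mathbb{R})$ be a class such that for every compact $K\subset\mathbb{R}$, continuous $h:K\to\mathbb{R}$ and $\eta>0$ there is $\gamma\in\Gamma$ with $\sup_K|h-\gamma|<\eta$. Let $\mathcal{G}$ be a class of real functions that are continuously differentiable on an open set containing $[0,1]^d$, such that for every $R(\boldsymbol{x})=\sum_{i=1}^N\psi_i(\boldsymbol{a}_i^\top\boldsymbol{x}+b_i)$ with $\psi_i\in C^1(\mathbb{R})$ and every $\eta>0$ there is $G\in\mathcal{G}$ with $\sup_{[0,1]^d}\|\nabla R-\nabla G\|<\eta$. Let $F:[0,1]^d\to\mathbb{R}$ be of the form $F(\boldsymbol{x})=T\big(\sum_{i=1}^N\psi_i(\boldsymbol{a}_i^\top\boldsymbol{x}+b_i)\big)$ with $T,\psi_i\in C^1(\mathbb{R})$, $\boldsymbol{a}_i\in\mathbb{R}^d$, $b_i\in\mathbb{R}$. Then for every $\epsilon>0$ there exist $\gamma\in\Gamma$, $G\in\mathcal{G}$ and $\beta\in\mathbb{R}$ such that, with $h(\boldsymbol{x})=\gamma(G(\boldsymbol{x})+\beta)\,\nabla G(\boldsymbol{x})$, $$\sup_{\boldsymbol{x}\in[0,1]^d}\|\nabla F(\boldsymbol{x})-h(\boldsymbol{x})\|<\epsilon .$$ Moreover every function of the form $h=\gamma(G+\beta)\nabla G$ with $\gamma$ continuous and $G$ continuously differentiable is the gradient of a $C^1$ function on $[0,1]^d$ (namely $\tilde\Gamma(G+\beta)$ with $\tilde\Gamma'=\gamma$).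
   Context: $C^0(\mathbb{R})$, $C^1(\mathbb{R})$: continuous and continuously differentiable real functions on $\mathbb{R}$. $\|\cdot\|$ is the Euclidean norm. *)

(* Defs.v *)
From HB Require Import structures.
From mathcomp Require Import all_boot all_order all_algebra.
From mathcomp Require Import all_classical all_reals all_analysis.
Set Implicit Arguments. Unset Strict Implicit. Unset Printing Implicit Defensive.
Import Order.TTheory GRing.Theory Num.Theory.
Import numFieldNormedType.Exports.
Local Open Scope classical_set_scope.
Local Open Scope ring_scope.

Section Defs.
Variables (R : realType) (d : nat).
Notation V := 'rV[R]_d.

Definition cube : set V := [set x | forall i : 'I_d, 0 <= x 0 i <= 1].

(* Euclidean norm (the library norm on 'rV is the max-norm) *)
Definition enorm (v : V) : R := Num.sqrt (\sum_(i < d) (v 0 i) ^+ 2).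

Definition dotv (a x : V) : R := \sum_(j < d) a 0 j * x 0 j.

Definition partial (i : 'I_d) (f : V -> R) (x : V) : R := 'D_(delta_mx 0 i) f x.
Definition grad (f : V -> R) (x : V) : V := \row_(i < d) partial i f x.

Definition C1on (U : set V) (f : V -> R) : Prop :=
  open U /\ (forall x, U x -> differentiable f x) /\
  (forall i : 'I_d, forall x, U x -> {for x, continuous (partial i f)}).

Definition C1_near_cube (f : V -> R) : Prop :=
  exists U : set V, cube `<=` U /\ C1on U f.

Definition ridge (N : nat) (psi : 'I_N -> R -> R) (a : 'I_N -> V) (b : 'I_N -> R)
  (x : V) : R := \sum_(i < N) psi i (dotv (a i) x + b i).
End Defs.

Definition C1R (R : realType) (f : R -> R) : Prop :=
  (forall x : R, derivable f x 1) /\ continuous (derive1 f).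

(* Main.v *)
Require Import Defs.
From HB Require Import structures.
From mathcomp Require Import all_boot all_order all_algebra.
From mathcomp Require Import all_classical all_reals all_analysis.
From mathcomp Require Import ring lra.
Import Order.TTheory GRing.Theory Num.Theory.
Import numFieldNormedType.Exports.
Local Open Scope classical_set_scope.
Local Open Scope ring_scope.
Section Anti.
Variable R : realType.
Variable g : R -> R.
Hypothesis gc : continuous g.
Notation mu := (@lebesgue_measure R).
Let P (A s : R) : R := (\int[mu]_(t in `[A, s]) g t)%R.

Let intg A s : mu.-integrable `[A, s] (EFin \o g).
Proof.
apply: continuous_compact_integrable; first exact: segment_compact.
exact: continuous_subspaceT.
Qed.

Let Psplit A c s : A <= c -> c <= s -> P A s = P A c + P c s.
Proof.
move=> Ac cs.
have := @Rintegral_itvB R g (BLeft A) (BRight s) c (intg A s).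
rewrite !bnd_simp => /(_ Ac cs).
rewrite Rintegral_itv_obnd_cbnd; last first.
  apply: integrableS (intg A s) => //; apply: subset_itvr; rewrite bnd_simp //.
rewrite /P => <-; ring.
Qed.
Let Pindep A A' s : A <= Num.min s 0 -> A' <= Num.min s 0 ->
  P A s - P A 0 = P A' s - P A' 0.
Proof.
wlog AA : A A' / A <= A'.
  move=> H h1 h2; have [|] := leP A A'; first by move=> ?; apply: H.
  by move=> /ltW h; symmetry; apply: H.
rewrite !le_min => /andP[As A0] /andP[A's A'0].
rewrite (Psplit _ _ _ AA A's) (Psplit _ _ _ AA A'0); ring.
Qed.

Definition antid (s : R) : R := P (Num.min s 0 - 1) s - P (Num.min s 0 - 1) 0.

Lemma antidP t : derivable antid t 1 /\ antid^`()%classic t = g t.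
Proof.
set A := Num.min t 0 - 2.
have hmt : Num.min t 0 <= t by rewrite ge_min lexx.
have hm0 : Num.min t 0 <= 0 by rewrite ge_min lexx orbT.
have near_eq : \forall s \near t, (fun s => P A s - P A 0) s = antid s.
  near=> s; rewrite /antid; apply: Pindep.
  - have : `|t - s| < 1.
      near: s; apply/nbhs_ballP; exists 1 => //= z; rewrite /ball /=.
    move=> /ltr_normlP [h1 h2].
    rewrite /A le_min; apply/andP; split; lra.
  - set m := Num.min s 0; lra.
have At : (BLeft A < BRight t)%E by rewrite /= lte_fin /A; lra.
have [d1 d2] := @continuous_FTC1 R g (BLeft A) t (t + 1) ltac:(lra) (intg A (t+1)) At (gc t).
have dA : derivable (fun s => P A s - P A 0) t 1.
  have -> : (fun s => P A s - P A 0) = (fun x => \int[mu]_(t in `[A, x]) g t) - cst (P A 0) by [].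
  apply: derivableB; [exact: d1 | exact: derivable_cst].
have e1 : 'D_1 (fun s => P A s - P A 0) t = g t.
  have -> : (fun s => P A s - P A 0) = (fun x => \int[mu]_(t in `[A, x]) g t) - cst (P A 0) by [].
  rewrite deriveB; [|exact: d1|exact: derivable_cst].
  by rewrite derive_cst subr0 -derive1E.
split; first exact: near_eq_derivable near_eq dA.
by rewrite derive1E -(near_eq_derive _ near_eq).
Unshelve. all: by end_near.
Qed.
End Anti.
Section Diff.
Variables (R : realType) (d : nat).
Notation V := 'rV[R]_d.

Lemma derive_line_gen (U : normedModType R) (f : U -> R) x v :
  'D_v f x = 'D_1 (fun h : R => f (h *: v + x)) 0.
Proof.
rewrite /derive; set g1 := fun h => h^-1 *: _; set g2 := fun h => h^-1 *: _.
suff -> : g1 = g2 by [].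
by rewrite funeqE /g1 /g2 => h /=; rewrite addr0 scale0r add0r [_%:A]mulr1.
Qed.

Lemma derive_line (f : V -> R) x v :
  'D_v f x = 'D_1 (fun h : R => f (h *: v + x)) 0.
Proof.
rewrite /derive; set g1 := fun h => h^-1 *: _; set g2 := fun h => h^-1 *: _.
suff -> : g1 = g2 by [].
by rewrite funeqE /g1 /g2 => h /=; rewrite addr0 scale0r add0r [_%:A]mulr1.
Qed.

Lemma comp_derive (f : V -> R) (g : R -> R) x v :
  derivable f x v -> derivable g (f x) 1 ->
  derivable (g \o f) x v /\ 'D_v (g \o f) x = g^`()%classic (f x) * 'D_v f x.
Proof.
move=> df dg.
set phi := fun h : R => f (h *: v + x).
have dphi : derivable phi 0 1 := proj1 (derivable1P _ _ _) df.
have phi0 : phi 0 = f x by rewrite /phi scale0r add0r.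
have dg' : derivable g (phi 0) 1 by rewrite phi0.
split.
  apply/(derivable1P (g \o f) x v). change (derivable (g \o phi) 0 1).
  apply/derivable1_diffP; apply: differentiable_comp; exact/derivable1_diffP.
rewrite derive_line (derive_line f x v).
change ('D_1 (g \o phi) 0 = g^`()%classic (f x) * 'D_1 phi 0).
by rewrite -!derive1E derive1_comp // phi0.
Qed.

Lemma derive_lin (f : V -> R) x v : differentiable f x ->
  'D_v f x = \sum_(j < d) v 0 j * partial j f x.
Proof.
move=> df; rewrite /partial deriveE // {1}(row_sum_delta v) linear_sum.
by apply: eq_bigr => j _; rewrite linearZ deriveE.
Qed.

Lemma dotv_line (a x v : V) (h : R) :
  dotv a (h *: v + x) = h * dotv a v + dotv a x.
Proof.
rewrite /dotv mulr_sumr -big_split /=; apply: eq_bigr => j _.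
by rewrite !mxE; ring.
Qed.

Lemma derive_affine (a : V) (c : R) x v :
  derivable (fun y => dotv a y + c) x v /\ 'D_v (fun y => dotv a y + c) x = dotv a v.
Proof.
have key : \forall h \near 0^', (fun h : R => h^-1 *: ((fun y => dotv a y + c) (h *: v + x) - (dotv a x + c))) h = dotv a v.
  near=> h; rewrite dotv_line.
  have hn0 : h != 0 by near: h; exact: nbhs_dnbhs_neq.
  have -> : h * dotv a v + dotv a x + c - (dotv a x + c) = h * dotv a v by ring.
  by rewrite [_ *: _]mulrA mulVf // mul1r.
split.
  by apply: (is_cvg_near_cst (dotv a v)); exact: key.
by apply: lim_near_cst => //; exact: key.
Unshelve. all: by end_near.
Qed.

Lemma derive_ridge {N} {psi : 'I_N -> R -> R} {a : 'I_N -> V} {b : 'I_N -> R} x v :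
  (forall i, C1R (psi i)) ->
  derivable (ridge psi a b) x v /\
  'D_v (ridge psi a b) x =
    \sum_(i < N) (psi i)^`()%classic (dotv (a i) x + b i) * dotv (a i) v.
Proof.
move=> Hpsi.
have E : ridge psi a b = \sum_(i < N) (fun y => psi i (dotv (a i) y + b i)).
  by rewrite fct_sumE.
have hi i : derivable (fun y => psi i (dotv (a i) y + b i)) x v /\
    'D_v (fun y => psi i (dotv (a i) y + b i)) x =
    (psi i)^`()%classic (dotv (a i) x + b i) * dotv (a i) v.
  have [d1 d2] := derive_affine (a i) (b i) x v.
  have := @comp_derive (fun y => dotv (a i) y + b i) (psi i) x v d1 ((Hpsi i).1 _).
  by rewrite d2.
rewrite E; split; first by apply: derivable_sum => i; exact: (hi i).1.
by rewrite derive_sum; [apply: eq_bigr => i _; exact: (hi i).2 | move=> i; exact: (hi i).1].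
Qed.

Lemma sum_sq_le n (u : 'I_n -> R) : (forall i, 0 <= u i) ->
  \sum_(i < n) u i ^+ 2 <= (\sum_(i < n) u i) ^+ 2.
Proof.
elim: n u => [|n IH] u u0; first by rewrite !big_ord0 expr0n.
rewrite !big_ord_recr /=.
have h1 := IH (fun i => u (widen_ord (leqnSn n) i)) (fun i => u0 _).
have h2 : 0 <= \sum_(i < n) u (widen_ord (leqnSn n) i) by apply: sumr_ge0 => i _.
have h3 := u0 ord_max.
set S := \sum_(i < n) _ in h1 h2 *; set T := \sum_(i < n) _ in h1 *.
set w := u ord_max in h3 *.
have h4 : 0 <= T * w by apply: mulr_ge0.
rewrite sqrrD; nra.
Qed.

Lemma comp_le_enorm (v : V) j : `|v 0 j| <= enorm v.
Proof.
rewrite /enorm -sqrtr_sqr ler_sqrt; last by apply: sumr_ge0 => i _; exact: sqr_ge0.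
rewrite (bigD1 j) //= lerDl; apply: sumr_ge0 => i _; exact: sqr_ge0.
Qed.

Lemma enorm_le_sum (v : V) : enorm v <= \sum_(j < d) `|v 0 j|.
Proof.
have h0 : 0 <= \sum_(j < d) `|v 0 j| by apply: sumr_ge0 => i _.
rewrite /enorm -(ger0_norm h0) -sqrtr_sqr ler_sqrt; last exact: sqr_ge0.
have H := @sum_sq_le d (fun j => `|v 0 j|) (fun j => normr_ge0 _).
apply: le_trans H.
by apply: ler_sum => j _; rewrite real_normK // num_real.
Qed.

Lemma line_derive {f : V -> R} {x : V} {t : R} :
  derivable f (t *: x) x ->
  derivable (fun s : R => f (s *: x)) t 1 /\
  'D_1 (fun s : R => f (s *: x)) t = 'D_x f (t *: x).
Proof.
move=> df.
have E : (fun h : R => (fun s : R => f (s *: x)) (h *: 1 + t)) =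
         (fun h : R => f (h *: x + t *: x)).
  by apply/funext => h /=; rewrite [h *: 1]mulr1 scalerDl.
split.
  apply/(derivable1P (fun s : R => f (s *: x)) t 1); rewrite E.
  exact: (proj1 (derivable1P _ _ _) df).
by rewrite (@derive_line_gen R^o (fun s : R => f (s *: x))) (derive_line f) E.
Qed.

Lemma cube_scale {x : V} {t : R} : cube x -> 0 <= t <= 1 -> cube (t *: x).
Proof.
move=> cx /andP[t0 t1] i; rewrite mxE; have /andP[h1 h2] := cx i.
apply/andP; split; first exact: mulr_ge0.
by rewrite -(mul1r 1) ler_pM.
Qed.

Definition LDD (f : V -> R) (p : V) :=
  forall v, derivable f p v /\ 'D_v f p = \sum_(j < d) v 0 j * partial j f p.

Lemma mvt_gen (f1 f2 : V -> R) (e : R) :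
  (forall p, cube p -> LDD f1 p) -> (forall p, cube p -> LDD f2 p) ->
  (forall p, cube p -> forall j, `|partial j f1 p - partial j f2 p| <= e) ->
  forall x, cube x -> `|(f1 x - f2 x) - (f1 0 - f2 0)| <= d%:R * e.
Proof.
move=> L1 L2 He x cx.
pose phi := fun s : R => f1 (s *: x) - f2 (s *: x).
have dphi t : 0 <= t <= 1 -> derivable phi t 1 /\
    'D_1 phi t = \sum_(j < d) x 0 j * (partial j f1 (t *: x) - partial j f2 (t *: x)).
  move=> t01; have ct := cube_scale cx t01.
  have [a1 b1] := line_derive (proj1 (L1 _ ct x)).
  have [a2 b2] := line_derive (proj1 (L2 _ ct x)).
  have -> : phi = (fun s => f1 (s *: x)) - (fun s => f2 (s *: x)) by [].
  split; first exact: derivableB.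
  rewrite deriveB // b1 b2 (proj2 (L1 _ ct x)) (proj2 (L2 _ ct x)) -sumrB.
  by apply: eq_bigr => j _; rewrite mulrBr.
have cont : {within `[0, 1], continuous phi}.
  apply: derivable_within_continuous => t; rewrite in_itv /= => t01.
  exact: (dphi t t01).1.
have [c c01 Hc] := @MVT_segment R phi (fun t => 'D_1 phi t) 0 1 ler01
  (fun t t01 => derivableP (dphi t ltac:(move: t01; rewrite in_itv /= => /andP[h1 h2]; apply/andP; split; exact: ltW)).1) cont.
have c01' : 0 <= c <= 1 by move: c01; rewrite in_itv.
have E : f1 x - f2 x - (f1 0 - f2 0) = phi 1 - phi 0 by rewrite /phi scale1r scale0r.
rewrite E Hc subr0 mulr1 (dphi c c01').2.
apply: le_trans (ler_norm_sum _ _ _) _.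
have -> : d%:R * e = \sum_(j < d) e by rewrite sumr_const card_ord mulr_natl.
apply: ler_sum => j _; rewrite normrM.
have hx : `|x 0 j| <= 1.
  have /andP[h1 h2] := cx j; by rewrite ger0_norm.
have ct := cube_scale cx c01'.
apply: le_trans (He _ ct j); rewrite -[X in _ <= X]mul1r.
by apply: ler_wpM2r.
Qed.

Lemma dotv_delta (a : V) j : dotv a (delta_mx 0 j) = a 0 j.
Proof.
rewrite /dotv (bigD1 j) //= mxE !eqxx mulr1 big1 ?addr0 // => k kj.
by rewrite mxE eqxx /= (negbTE kj) mulr0.
Qed.

Lemma ridge_LDD N (psi : 'I_N -> R -> R) (a : 'I_N -> V) (b : 'I_N -> R) p :
  (forall i, C1R (psi i)) -> LDD (ridge psi a b) p.
Proof.
move=> Hpsi v; split; first exact: (derive_ridge p v Hpsi).1.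
rewrite (derive_ridge p v Hpsi).2 /partial.
have E j : 'D_(delta_mx 0 j) (ridge psi a b) p =
    \sum_(i < N) (psi i)^`()%classic (dotv (a i) p + b i) * a i 0 j.
  rewrite (derive_ridge p (delta_mx 0 j) Hpsi).2.
  by apply: eq_bigr => i _; rewrite dotv_delta.
under [RHS]eq_bigr do rewrite E mulr_sumr.
rewrite exchange_big /=; apply: eq_bigr => i _.
rewrite /dotv mulr_sumr; apply: eq_bigr => j _; ring.
Qed.

Lemma diff_LDD (f : V -> R) p : differentiable f p -> LDD f p.
Proof.
move=> df v; split; first exact: diff_derivable.
exact: derive_lin.
Qed.
End Diff.
Section Unif.
Variable R : realType.

Lemma unif_cont (f : R -> R) (B eps : R) : continuous f -> 0 < eps ->
  exists2 del, 0 < del & forall s t, `|s| <= B -> `|t| <= B ->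
    `|s - t| < del -> `|f s - f t| < eps.
Proof.
move=> fc e0.
have cov := (compact_near_coveringP `[-B, B]).1 (@segment_compact R (-B) B).
have H : \forall del \near (0:R)^'+, `[-B, B] `<=`
   (fun s => forall t, `|t| <= B -> `|s - t| < del -> `|f s - f t| < eps).
  apply: (cov R (0:R)^'+ (fun del s => forall t, `|t| <= B -> `|s - t| < del -> `|f s - f t| < eps)).
  move=> x _.
  have /cvgrPdist_lt /(_ (eps / 2)) := fc x.
  move=> /(_ ltac:(lra)) /nbhs_ballP [eta eta0 Heta].
  have eta0' : 0 < eta by [].
  near=> x' del.
  move=> t _ /= hxt.
  have h1 : `|x - x'| < eta / 2.
    near: x'; apply/nbhs_ballP; exists (eta / 2) => /=; first lra.
    by move=> z; rewrite /ball /=.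
  have h2 : del < eta / 2.
    near: del; apply: nbhs_right_lt. lra.
  have hx' : `|f x - f x'| < eps / 2 by apply: Heta; rewrite /ball /=; lra.
  have hxt' : `|x - t| < eta.
    move: h1 hxt => /ltr_normlP [h1 h1'] /ltr_normlP [h3 h3']; apply/ltr_normlP; split; lra.
  have ht : `|f x - f t| < eps / 2 by apply: Heta; rewrite /ball /=.
  move: hx' ht => /ltr_normlP [k1 k1'] /ltr_normlP [k3 k3']; apply/ltr_normlP; split; lra.
near (0:R)^'+ => del.
exists del; first by near: del; exact: nbhs_right_gt.
near: del; apply: filterS H => del HH s t hs ht hst.
have Hs : [set` `[-B, B]] s by rewrite /= in_itv /=; move: hs => /ler_normlP [h h']; apply/andP; split; lra.
exact: (HH s Hs t ht hst).
Unshelve. all: by end_near.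
Qed.

Lemma cont_bound (f : R -> R) (B : R) : continuous f ->
  exists M, 0 <= M /\ forall t, `|t| <= B -> `|f t| <= M.
Proof.
move=> fc; have [B0|B0] := ltP B 0.
  by exists 0; split => // t ht; have := normr_ge0 t; lra.
have h1 : - B <= B by lra.
have h2 : {within `[- B, B], continuous (fun t => `|f t|)}.
  apply: continuous_subspaceT => t; apply: continuous_comp; first exact: fc.
  exact: norm_continuous.
have [c _ Hc] := EVT_max h1 h2.
exists `|f c|; split => // t ht; apply: Hc.
by rewrite in_itv /=; move: ht => /ler_normlP [h h']; apply/andP; split; lra.
Qed.

Lemma fam_bound N (F : 'I_N -> R -> R) (B : R) : (forall i, continuous (F i)) ->
  exists M, 0 <= M /\ forall i t, `|t| <= B -> `|F i t| <= M.
Proof.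
move=> Fc.
have [Mf HM] := choice (fun i => @cont_bound (F i) B (Fc i)).
exists (\sum_(i < N) Mf i); split; first by apply: sumr_ge0 => i _; exact: (HM i).1.
move=> i t ht; apply: le_trans ((HM i).2 t ht) _.
rewrite (bigD1 i) //= lerDl; apply: sumr_ge0 => j _; exact: (HM j).1.
Qed.
End Unif.

Arguments comp_derive {R d f g x v}.
Arguments derive_ridge {R d N psi a b} x v.
Arguments ridge_LDD {R d N psi a b p}.
Arguments diff_LDD {R d f p}.
Arguments mvt_gen {R d f1 f2 e}.
Arguments unif_cont {R f} B {eps}.
Arguments cont_bound {R f} B.
Arguments fam_bound {R N F} B.
Arguments antidP {R g}.
Arguments comp_le_enorm {R d}.
Arguments enorm_le_sum {R d}.
Arguments dotv_delta {R d}.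
Arguments derive_lin {R d f x} v.

Section Part2.
Variables (R : realType) (d : nat).
Notation V := 'rV[R]_d.

Lemma add_cst_derive (G : V -> R) (c : R) y v : derivable G y v ->
  derivable (fun z => G z + c) y v /\ 'D_v (fun z => G z + c) y = 'D_v G y.
Proof.
move=> dG; have -> : (fun z => G z + c) = G + cst c by [].
split; first by apply: derivableD => //; exact: derivable_cst.
rewrite deriveD //.
by rewrite derive_cst addr0.
Qed.

Lemma part2 (g : R -> R) (G : V -> R) (beta : R) :
  continuous g -> C1_near_cube G ->
  exists Gt : R -> R,
    (forall t, derivable Gt t 1 /\ derive1 Gt t = g t) /\
    C1_near_cube (fun x => Gt (G x + beta)) /\
    (forall x, cube x ->
       grad (fun y => Gt (G y + beta)) x = g (G x + beta) *: grad G x).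
Proof.
move=> gc [U [cU [oU [dU cpU]]]].
set Gt := @antid R g; have HGt := antidP gc.
have key y v : U y -> derivable (fun z => Gt (G z + beta)) y v /\
    'D_v (fun z => Gt (G z + beta)) y = g (G y + beta) * 'D_v G y.
  move=> Uy; have [d1 d2] := @add_cst_derive G beta y v (@diff_derivable _ _ _ G y v (dU y Uy)).
  have [e1 e2] := comp_derive d1 (HGt (G y + beta)).1.
  by split => //; rewrite e2 d2 (HGt _).2.
exists Gt; split => //; split; last first.
  move=> x cx; apply/rowP => j; rewrite !mxE /partial.
  by rewrite (key x _ (cU x cx)).2.
exists U; split => //; split => //; split.
  move=> x Ux.
  have dG' : differentiable (fun z => G z + beta) x.
    have -> : (fun z => G z + beta) = G + cst beta by [].
    by apply: differentiableD => //; exact: dU.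
  apply: (@differentiable_comp _ _ _ _ (fun z => G z + beta) Gt x dG').
  exact/derivable1_diffP/(HGt _).1.
move=> i x Ux.
have nU : \forall y \near x, U y by apply: open_nbhs_nbhs; split.
have eqn : {near x, (fun y => g (G y + beta) * partial i G y) =1
    partial i (fun y => Gt (G y + beta))}.
  near=> y; have Uy : U y by near: y; exact: nU.
  by rewrite /partial (key y _ Uy).2.
apply: cvg_trans; first exact: near_eq_cvg eqn.
have -> : partial i (fun y => Gt (G y + beta)) x = g (G x + beta) * partial i G x by rewrite /partial (key x _ Ux).2.
apply: cvgM; last exact: cpU.
apply: (@continuous_comp _ _ _ (fun y => G y + beta) g x _ (gc _)).
have cG : {for x, continuous G} by exact: differentiable_continuous (dU x Ux).
exact: (cvgD cG (cvg_cst beta)).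
Unshelve. all: by end_near.
Qed.
End Part2.

Section Part1.
Variables (R : realType) (d : nat).
Notation V := 'rV[R]_d.

Lemma comp_ineq (u w c r q MT e eta : R) :
  `|u| <= MT -> `|r - q| <= e -> `|u - w| <= eta -> `|w - c| <= eta ->
  `|u * r - c * q| <= MT * e + 2 * eta * `|q|.
Proof.
move=> hu hrq huw hwc.
have -> : u * r - c * q = u * (r - q) + ((u - w) * q + (w - c) * q) by ring.
apply: le_trans (ler_normD _ _) _.
apply: lerD; first by rewrite normrM; apply: ler_pM.
apply: le_trans (ler_normD _ _) _; rewrite !normrM.
have := normr_ge0 q; have := normr_ge0 (u - w); have := normr_ge0 (w - c).
move=> h1 h2 h3.
have : `|u - w| * `|q| <= eta * `|q| by apply: ler_wpM2r.
have : `|w - c| * `|q| <= eta * `|q| by apply: ler_wpM2r.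
lra.
Qed.

Lemma dot_bound (a x : V) (c : R) : cube x ->
  `|dotv a x + c| <= `|c| + \sum_(j < d) `|a 0 j|.
Proof.
move=> cx; apply: le_trans (ler_normD _ _) _; rewrite addrC lerD2l.
apply: le_trans (ler_norm_sum _ _ _) _; apply: ler_sum => j _.
rewrite normrM; have /andP[h1 h2] := cx j.
rewrite -[X in _ <= X]mulr1; apply: ler_wpM2l => //; by rewrite ger0_norm.
Qed.

Lemma ridge_partial N (psi : 'I_N -> R -> R) (a : 'I_N -> V) (b : 'I_N -> R) x j :
  (forall i, C1R (psi i)) ->
  partial j (ridge psi a b) x =
  \sum_(i < N) (psi i)^`()%classic (dotv (a i) x + b i) * a i 0 j.
Proof.
move=> Hpsi; rewrite /partial (derive_ridge x (delta_mx 0 j) Hpsi).2.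
by apply: eq_bigr => i _; rewrite dotv_delta.
Qed.

Lemma part1 (Gam : set (R -> R)) (GG : set ('rV[R]_d -> R))
  (HGam : forall (K : set R) (h : R -> R) (eta : R),
      compact K -> {within K, continuous h} -> 0 < eta ->
      exists2 g, Gam g &
        exists2 e, e < eta & forall x, K x -> `|h x - g x| <= e)
  (HGG0 : forall G, GG G -> C1_near_cube G)
  (HGG : forall (N : nat) (psi : 'I_N -> R -> R) (a : 'I_N -> 'rV[R]_d)
           (b : 'I_N -> R) (eta : R),
      (forall i, C1R (psi i)) -> 0 < eta ->
      exists2 G, GG G &
        exists2 e, e < eta & forall x, cube x ->
          enorm (grad (ridge psi a b) x - grad G x) <= e)
  (N : nat) (T : R -> R) (psi : 'I_N -> R -> R) (a : 'I_N -> 'rV[R]_d)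
  (b : 'I_N -> R) (HT : C1R T) (Hpsi : forall i, C1R (psi i)) :
  (forall eps : R, 0 < eps ->
     exists g, exists G, exists beta : R, Gam g /\ GG G /\
       exists2 e, e < eps & forall x, cube x ->
         enorm (grad (fun y => T (ridge psi a b y)) x
                - g (G x + beta) *: grad G x) <= e).
Proof.
move=> eps eps0.
pose Rf := ridge psi a b.
pose S := \sum_(i < N) (`|b i| + \sum_(j < d) `|a i 0 j|).
have hL i x : cube x -> `|dotv (a i) x + b i| <= S.
  move=> cx; apply: le_trans (dot_bound (a i) x (b i) cx) _.
  rewrite /S (bigD1 i) //= lerDl; apply: sumr_ge0 => k _.
  by apply: addr_ge0 => //; apply: sumr_ge0.
have psic i : continuous (psi i).
  move=> t; apply: differentiable_continuous; apply/derivable1_diffP.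
  exact: (Hpsi i).1.
have [Mp [Mp0 HMp]] := fam_bound S psic.
have [Md [Md0 HMd]] := @fam_bound R N (fun i => (psi i)^`()%classic) S (fun i => (Hpsi i).2).
pose MR := N%:R * Mp.
have hR x : cube x -> `|Rf x| <= MR.
  move=> cx; rewrite /Rf /ridge; apply: le_trans (ler_norm_sum _ _ _) _.
  have -> : MR = \sum_(i < N) Mp by rewrite /MR sumr_const card_ord mulr_natl.
  by apply: ler_sum => i _; exact: HMp (hL i x cx).
pose M1 := \sum_(j < d) \sum_(i < N) Md * `|a i 0 j|.
have hD x : cube x -> \sum_(j < d) `|partial j Rf x| <= M1.
  move=> cx; apply: ler_sum => j _; rewrite ridge_partial //.
  apply: le_trans (ler_norm_sum _ _ _) _; apply: ler_sum => i _.
  by rewrite normrM; apply: ler_wpM2r => //; exact: HMd (hL i x cx).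
have M10 : 0 <= M1.
  by apply: sumr_ge0 => j _; apply: sumr_ge0 => i _; apply: mulr_ge0.
have [MT [MT0 HMT]] := @cont_bound R (derive1 T) (MR + 1) HT.2.
have MR0 : 0 <= MR by apply: mulr_ge0.
have d0 : 0 <= d%:R :> R by exact: ler0n.
pose C := M1 + d%:R + 1.
have C0 : 0 < C by rewrite /C; lra.
pose eta := eps / (4 * C).
have eta0 : 0 < eta by apply: divr_gt0 => //; lra.
have [del del0 Hdel] := @unif_cont R (derive1 T) (MR + 1) eta HT.2 eta0.
pose k := eps / (4 * (MT + 1)).
have k0 : 0 < k by apply: divr_gt0 => //; lra.
pose m := Num.min 1 (Num.min del k).
have m1 : m <= 1 by rewrite /m ge_min lexx.
have mdel : m <= del by rewrite /m ge_min ge_min lexx orbT.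
have mk : m <= k by rewrite /m ge_min ge_min lexx !orbT.
have m0 : 0 < m by rewrite /m !lt_min ltr01 del0 k0.
pose e0 := m / (d%:R + 1).
have e00 : 0 < e0 by apply: divr_gt0 => //; lra.
have e0E : e0 * (d%:R + 1) = m by rewrite /e0 divfK //; apply: lt0r_neq0; lra.
have [G GG_G [e e_lt He]] := HGG N psi a b e0 Hpsi e00.
have [U [cU [oU [dU cpU]]]] := HGG0 G GG_G.
have cube0 : cube (0 : V) by move=> i; rewrite mxE lexx ler01.
have e_ge0 : 0 <= e by apply: le_trans (He 0 cube0); exact: sqrtr_ge0.
have de : d%:R * e < m by nra.
have Hpart p : cube p -> forall j, `|partial j G p - partial j Rf p| <= e.
  move=> cp j; apply: le_trans (He p cp); rewrite distrC.
  by have := comp_le_enorm (grad (ridge psi a b) p - grad G p) j; rewrite !mxE.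
have mvt x : cube x -> `|(G x - Rf x) - (G 0 - Rf 0)| <= d%:R * e.
  apply: mvt_gen.
  - by move=> p cp; apply: diff_LDD; exact: dU (cU p cp).
  - by move=> p cp; exact: ridge_LDD.
  - exact: Hpart.
pose beta := Rf 0 - G 0.
have close x : cube x -> `|G x + beta - Rf x| <= d%:R * e.
  move=> cx; have := mvt x cx.
  by have -> : G x + beta - Rf x = G x - Rf x - (G 0 - Rf 0) by rewrite /beta; ring.
have cK : {within [set` `[-(MR+1), MR+1]], continuous (derive1 T)}.
  by apply: continuous_subspaceT; exact: HT.2.
have [g Gg [e' e'lt He']] := HGam [set` `[-(MR+1), MR+1]] (derive1 T) eta
   (@segment_compact R _ _) cK eta0.
exists g, G, beta; split => //; split => //.
exists (d%:R * (MT * e) + 2 * eta * C).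
  have q1 : k * (MT + 1) = eps / 4 by rewrite /k; field; lra.
  have q2 : 2 * eta * C = eps / 2 by rewrite /eta; field; lra.
  have q3 : d%:R * e * (MT + 1) < eps / 4 by nra.
  have q4 : d%:R * (MT * e) <= d%:R * e * (MT + 1) by nra.
  lra.
move=> x cx.
apply: le_trans (enorm_le_sum _) _.
have hRx := hR x cx.
have hc := close x cx.
have hGx : `|G x + beta| <= MR + 1.
  move: hc hRx => /ler_normlP [h1 h2] /ler_normlP [h3 h4]; apply/ler_normlP; split; lra.
have compb j : `|(grad (fun y => T (ridge psi a b y)) x - g (G x + beta) *: grad G x) 0 j|
    <= MT * e + 2 * eta * `|partial j G x|.
  rewrite !mxE.
  have -> : partial j (fun y => T (ridge psi a b y)) x =
      (derive1 T) (Rf x) * partial j Rf x.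
    rewrite /partial; exact: (comp_derive (derive_ridge x (delta_mx 0 j) Hpsi).1 (HT.1 _)).2.
  apply: (@comp_ineq _ ((derive1 T) (G x + beta))).
  - by apply: HMT; lra.
  - by rewrite distrC; exact: Hpart.
  - apply: ltW; apply: Hdel => //; first lra.
    rewrite distrC; apply: le_lt_trans hc _; lra.
  - apply: le_trans (ltW e'lt); apply: He'.
    rewrite /= in_itv /=; move: hGx => /ler_normlP [h1 h2]; apply/andP; split; lra.
apply: le_trans (ler_sum _ (fun j _ => compb j)) _.
rewrite big_split /= sumr_const card_ord -mulr_sumr.
apply: lerD; first by rewrite mulr_natl.
apply: ler_wpM2l; first lra.
have hq : \sum_(j < d) `|partial j G x| <= \sum_(j < d) (`|partial j Rf x| + e).
  apply: ler_sum => j _.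
  have h := Hpart x cx j.
  have := ler_normD (partial j Rf x) (partial j G x - partial j Rf x).
  rewrite addrC subrK => h'; apply: le_trans h' _; lra.
apply: le_trans hq _.
rewrite big_split /= sumr_const card_ord -mulr_natl.
have := hD x cx; rewrite /C; lra.
Qed.
End Part1.
Theorem theorem5 (R : realType) (d : nat)
  (Gam : set (R -> R)) (GG : set ('rV[R]_d -> R))
  (HGam0 : forall g, Gam g -> continuous g)
  (HGam : forall (K : set R) (h : R -> R) (eta : R),
      compact K -> {within K, continuous h} -> 0 < eta ->
      exists2 g, Gam g &
        exists2 e, e < eta & forall x, K x -> `|h x - g x| <= e)
  (HGG0 : forall G, GG G -> C1_near_cube G)
  (HGG : forall (N : nat) (psi : 'I_N -> R -> R) (a : 'I_N -> 'rV[R]_d)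
           (b : 'I_N -> R) (eta : R),
      (forall i, C1R (psi i)) -> 0 < eta ->
      exists2 G, GG G &
        exists2 e, e < eta & forall x, cube x ->
          enorm (grad (ridge psi a b) x - grad G x) <= e)
  (N : nat) (T : R -> R) (psi : 'I_N -> R -> R) (a : 'I_N -> 'rV[R]_d)
  (b : 'I_N -> R) (HT : C1R T) (Hpsi : forall i, C1R (psi i)) :
  (forall eps : R, 0 < eps ->
     exists g, exists G, exists beta : R, Gam g /\ GG G /\
       exists2 e, e < eps & forall x, cube x ->
         enorm (grad (fun y => T (ridge psi a b y)) x
                - g (G x + beta) *: grad G x) <= e)
  /\
  (forall (g : R -> R) (G : 'rV[R]_d -> R) (beta : R),
     continuous g -> C1_near_cube G ->
     exists Gt : R -> R,
       (forall t, derivable Gt t 1 /\ derive1 Gt t = g t) /\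
       C1_near_cube (fun x => Gt (G x + beta)) /\
       (forall x, cube x ->
          grad (fun y => Gt (G y + beta)) x = g (G x + beta) *: grad G x)).
Proof.
split; first exact: (@part1 R d Gam GG HGam HGG0 HGG N T psi a b HT Hpsi).
move=> g G beta gc cG; exact: (@part2 R d g G beta gc cG).
Qed.
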